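(* Let $\alpha,\beta\in\mathbb{C}$ and let $\lambda_1,\lambda_2\notin\{0,-1,-2,\dots\}$ with $\lambda_1+\lambda_2\notin\{0,-1,-2,\dots\}$. The map $\Delta_{\lambda_1,\lambda_2}: U(sl_2)\to \mathrm{End}(V_{\lambda_1}\otimes V_{\lambda_2})$ given by $\Delta(H)=H\otimes\mathbb{I}+\mathbb{I}\otimes H$, $\Delta(E)=E\otimes \mathbb{I}+\mathbb{I}\otimes E$, $\Delta(F)=\frac{H^{(1)}-\lambda_1+2\alpha+2}{H^{(1)}+\lambda_1}F\otimes \mathbb{I}+\frac{H^{(2)}-\lambda_2+2\beta+2}{H^{(2)}+\lambda_2}\mathbb{I}\otimes F$ is an algebra homomorphism, and under it $V_{\lambda_1}\otimes V_{\lambda_2}\sim\bigoplus_{k\ge 0}V_{\lambda_1+\lambda_2+2k}$ with Clebsch--Gordan coefficients $R_n(k,N)=\binom{N}{n}\,{}_3F_2\left(-k,\ k+\alpha+\beta-N+1,\ -n;\ \alpha+1,\ -N;\ 1\right)$, subject to the constraint $\alpha+\beta+2=\lambda_1+\lambda_2$, i.e. $|\lambda_1+\lambda_2+2k,N-k\rangle=\sum_{n=0}^N R_n(k,N)|\lambda_1,n\rangle\otimes|\lambda_2,N-n\rangle$. When $\alpha+1=\lambda_1$ and $\beta+1=\lambda_2$ this reduces to the usual coproduct of $sl_2$.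
   Context: $sl_2$ is generated by $E,F,H$ with $[H,E]=2E$, $[H,F]=-2F$, $[E,F]=H$, and $V_\lambda$ is the lowest-weight Verma module with basis $|\lambda,n\rangle$, $n=0,1,\dots$, on which $H|\lambda,n\rangle=(\lambda+2n)|\lambda,n\rangle$, $E|\lambda,n\rangle=|\lambda,n+1\rangle$, $F|\lambda,n\rangle=-n(n+\lambda-1)|\lambda,n-1\rangle$. Notation: $H^{(1)}=H\otimes\mathbb{I}$, $H^{(2)}=\mathbb{I}\otimes H$, with $\mathbb{I}$ the identity; the ${}_3F_2$ is the generalized hypergeometric function (these are proportional to dual Hahn polynomials). *)

(* Defs.v *)
From HB Require Import structures.
From mathcomp Require Import all_boot all_order all_algebra.
From mathcomp Require Import reals complex.
Set Implicit Arguments. Unset Strict Implicit. Unset Printing Implicit Defensive.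
Import Order.TTheory GRing.Theory Num.Theory.
Local Open Scope ring_scope.

Section SL2Defs.
Variable K : fieldType.

(* A vector of the lowest-weight Verma module V_lambda is represented by its
   coordinate function n |-> coefficient of |lambda,n>.  A vector of
   V_l1 (x) V_l2 is represented by (n,m) |-> coefficient of |l1,n>(x)|l2,m>. *)
Definition vec := nat -> K.
Definition tvec := nat -> nat -> K.

Definition opH (l : K) (v : vec) : vec := fun n => (l + 2 * n%:R) * v n.
(* E|l,n> = |l,n+1> *)
Definition opE (v : vec) : vec := fun n => if n is n'.+1 then v n' else 0.
(* F|l,n> = -n(n+l-1)|l,n-1>, i.e. coefficient at n is -(n+1)(n+l) v(n+1) *)
Definition opF (l : K) (v : vec) : vec :=
  fun n => - (n.+1%:R * (n%:R + l)) * v n.+1.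

Definition fH (l : K) (f : K -> K) (v : vec) : vec := fun n => f (l + 2 * n%:R) * v n.

Definition ratio (l a : K) (h : K) : K := (h - l + 2 * a + 2) / (h + l).

Definition tens1 (X : vec -> vec) (w : tvec) : tvec := fun n m => X (fun i => w i m) n.
Definition tens2 (X : vec -> vec) (w : tvec) : tvec := fun n m => X (w n) m.

Definition DH (l1 l2 : K) (w : tvec) : tvec :=
  fun n m => tens1 (opH l1) w n m + tens2 (opH l2) w n m.
Definition DE (w : tvec) : tvec :=
  fun n m => tens1 opE w n m + tens2 opE w n m.
(* Delta(F) = (H1 - l1 + 2a + 2)/(H1 + l1) F(x)I + (H2 - l2 + 2b + 2)/(H2 + l2) I(x)F,
   the rational function of H acting after F (operator composition order). *)
Definition DF (l1 l2 a b : K) (w : tvec) : tvec :=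
  fun n m => tens1 (fun v => fH l1 (ratio l1 a) (opF l1 v)) w n m
           + tens2 (fun v => fH l2 (ratio l2 b) (opF l2 v)) w n m.

Definition tcomm (X Y : tvec -> tvec) (w : tvec) : tvec :=
  fun n m => X (Y w) n m - Y (X w) n m.

(* vectors of the (algebraic) tensor product: finitely supported *)
Definition fin_supp (w : tvec) : Prop :=
  exists M : nat, forall n m, (M <= n + m)%N -> w n m = 0.

Definition poch (x : K) (j : nat) : K := \prod_(i < j) (x + i%:R).

(* Terminating generalized hypergeometric function
   3F2(-m, a, b; c, d; 1) = sum_{j=0}^{m} (-m)_j (a)_j (b)_j / ((c)_j (d)_j j!)
   (the terms with j > m vanish since (-m)_j = 0). *)
Definition hyp3F2 (m : nat) (a b c d : K) : K :=
  \sum_(j < m.+1) poch (- m%:R) j * poch a j * poch b j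
                   / (poch c j * poch d j * (j`!)%:R).

Definition CG (a b : K) (n k N : nat) : K :=
  'C(N, n)%:R * hyp3F2 n (- k%:R) (k%:R + a + b + 1) (a + 1) (- N%:R).

(* |l1+l2+2k, j> := sum_{n=0}^{N} R_n(k,N) |l1,n>(x)|l2,N-n>,  N = k + j *)
Definition cgvec (a b : K) (k j : nat) : tvec :=
  fun n m => if n + m == (k + j)%N then CG a b n k (k + j) else 0.

End SL2Defs.

(* Main.v *)
Require Import Defs.
From HB Require Import structures.
From mathcomp Require Import all_boot all_order all_algebra.
From mathcomp Require Import reals complex.
From mathcomp Require Import ring lra zify.
Import Order.TTheory GRing.Theory Num.Theory.
Local Open Scope ring_scope.

Section Gen.
Variable K : numFieldType.

Lemma pochS (x : K) j : poch x j.+1 = poch x j * (x + j%:R).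
Proof. by rewrite /poch big_ord_recr. Qed.

Lemma poch0 (x : K) : poch x 0 = 1.
Proof. by rewrite /poch big_ord0. Qed.

Lemma poch_neg (n j : nat) : poch (- n%:R : K) j = (-1) ^+ j * (n ^_ j)%:R.
Proof.
elim: j => [|j IH]; first by rewrite poch0 expr0 ffactn0 mul1r.
rewrite pochS IH ffactnSr exprS natrM.
case: (leqP j n) => hj.
  rewrite natrB //; ring.
by rewrite ffact_small //; ring.
Qed.

Lemma poch_neq0 (x : K) j : (forall i, (i < j)%N -> x + i%:R != 0) -> poch x j != 0.
Proof. by move=> h; rewrite /poch; apply/prodf_neq0 => i _; apply: h. Qed.

Lemma natr_neq0 (n : nat) : (0 < n)%N -> (n%:R : K) != 0.
Proof. by move=> h; rewrite pnatr_eq0 -lt0n. Qed.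

Lemma nat_id N n j : (j <= n)%N -> (n <= N)%N ->
  ('C(N, n) * n ^_ j = 'C(N - j, n - j) * N ^_ j)%N.
Proof.
move=> hj hn.
have hp : (0 < (n - j)`! * (N - n)`!)%N by rewrite muln_gt0 !fact_gt0.
apply/eqP; rewrite -(eqn_pmul2r hp); apply/eqP.
have -> : ('C(N, n) * n ^_ j * ((n - j)`! * (N - n)`!) = N`!)%N.
  by rewrite mulnA -(mulnA _ (n ^_ j)) ffact_fact // -mulnA bin_fact.
have e : (N - n = (N - j) - (n - j))%N by lia.
rewrite [in RHS]e mulnAC bin_fact; last by lia.
by rewrite mulnC ffact_fact //; apply: leq_trans hn.
Qed.


Lemma sum_trunc (F : nat -> K) M0 M : (M0 <= M)%N ->
  (forall j, (M0 <= j)%N -> F j = 0) ->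
  \sum_(j < M) F j = \sum_(j < M0) F j.
Proof.
move=> hM hF; rewrite -(subnKC hM) big_split_ord /=.
rewrite [X in _ + X]big1 ?addr0 // => i _.
by apply: hF; rewrite leq_addr.
Qed.

Variables a b : K.

Definition Ak k j : K := poch (- k%:R) j * poch (k%:R + a + b + 1) j
   / (poch (a + 1) j * (j`!)%:R).
Definition bb N n j : nat := if (j <= n)%N then 'C(N - j, n - j) else 0%N.
Definition Tt k N n j : K := (bb N n j)%:R * Ak k j.
Definition Rs k N n : K := \sum_(j < k.+1) Tt k N n j.

Lemma Ak_big k j : (k < j)%N -> Ak k j = 0.
Proof. by move=> h; rewrite /Ak poch_neg ffact_small // mulr0 !mul0r. Qed.

Lemma Ak0 k : Ak k 0 = 1.
Proof. by rewrite /Ak !poch0 fact0 !mul1r invr1. Qed.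

Hypothesis ha : forall j : nat, a + 1 != - j%:R.

Lemma pa_neq0 j : poch (a + 1) j != 0.
Proof. by apply: poch_neq0 => i _; rewrite addr_eq0 ha. Qed.

Lemma link n k N : (k <= N)%N -> CG a b n k N = Rs k N n.
Proof.
move=> hk; rewrite /CG /Rs /hyp3F2.
case: (leqP n N) => hn; last first.
  rewrite bin_small // mul0r big1 // => j _.
  rewrite /Tt /bb; case: ifP => hj; last by rewrite mul0r.
  rewrite bin_small ?mul0r //.
  have := ltn_ord j; lia.
rewrite mulr_sumr.
rewrite -(@sum_trunc (Tt k N n) k.+1 (n + k).+1); first last.
- by move=> j hj; rewrite /Tt Ak_big ?mulr0.
- lia.
rewrite (@sum_trunc (Tt k N n) n.+1 (n + k).+1); first last.
- by move=> j hj; rewrite /Tt /bb; case: ifP => h; [lia| rewrite mul0r].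
- lia.
apply: eq_bigr => [[j hj]] _ /=.
have hjn : (j <= n)%N by [].
rewrite /Tt /bb /Ak hjn.
have e := nat_id N n j hjn hn.
have hNj : ((N ^_ j)%:R : K) != 0 by rewrite pnatr_eq0 -lt0n ffact_gt0; lia.
have hnj : ((n ^_ j)%:R : K) != 0 by rewrite pnatr_eq0 -lt0n ffact_gt0.
have hf : ((j`!)%:R : K) != 0 by rewrite pnatr_eq0 -lt0n fact_gt0.
have hs : ((-1) ^+ j : K) != 0 by rewrite expf_neq0 // oppr_eq0 oner_eq0.
have hp := pa_neq0 j.
have eK : ('C(N, n))%:R = ('C(N - j, n - j))%:R * (N ^_ j)%:R / (n ^_ j)%:R :> K.
  by rewrite -natrM -e natrM mulfK.
rewrite eK !poch_neg.
field.
by rewrite hf hp hNj hs hnj.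
Qed.


Lemma bbE N n' j : (j <= N)%N -> (bb N n' j + bb N n'.+1 j = bb N.+1 n'.+1 j)%N.
Proof.
move=> hj; rewrite /bb.
case: (leqP j n') => h1.
  rewrite (leq_trans h1 (leqnSn _)) subSn // subSn // binS; lia.
case: (leqP j n'.+1) => h2; last by [].
have -> : j = n'.+1 by lia.
by rewrite !subnn !bin0.
Qed.

Lemma bb0 N j : bb N 0 j = bb N.+1 0 j.
Proof. by rewrite /bb; case: ifP => // _; rewrite sub0n !bin0. Qed.

Lemma CG_E n k N : (k <= N)%N ->
  (if n is n'.+1 then CG a b n' k N else 0) + CG a b n k N = CG a b n k N.+1.
Proof.
move=> hk; have hk' : (k <= N.+1)%N by lia.
case: n => [|n']; rewrite !link // ?add0r /Rs.
  by apply: eq_bigr => j _; rewrite /Tt bb0.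
rewrite -big_split /=; apply: eq_bigr => j _.
rewrite /Tt -mulrDl -natrD bbE //.
have := ltn_ord j; lia.
Qed.


Lemma Ak_rec k j : Ak k j.+1 =
  Ak k j * ((- k%:R + j%:R) * (k%:R + a + b + 1 + j%:R)) / ((a + 1 + j%:R) * j.+1%:R).
Proof.
have h1 := pa_neq0 j.
have h2 : a + 1 + j%:R != 0 by rewrite addr_eq0 ha.
have h3 : (j.+1%:R : K) != 0 by rewrite pnatr_eq0.
have h4 : ((j`!)%:R : K) != 0 by rewrite pnatr_eq0 -lt0n fact_gt0.
have h3' : (1 + j%:R : K) != 0 by rewrite addrC natr1 pnatr_eq0.
rewrite /Ak !pochS factS natrM.
field.
by rewrite h1 h2 h4 h3'.
Qed.

Definition Wf k n j : K := if j is i.+1 then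
  Ak k i * (bb k n i)%:R * (k%:R + a + b + 1 + i%:R) else 0.

Lemma LW_term n k j : (n < k)%N -> (j <= n)%N ->
  n.+1%:R * (n.+1%:R + a) * Tt k k n.+1 j + (k - n)%:R * ((k - n)%:R + b) * Tt k k n j
  = (k - n)%:R * (Wf k n j.+1 - Wf k n j).
Proof.
move=> hnk hjn.
have hkn : ((k - n)%:R : K) = k%:R - n%:R by rewrite natrB //; lia.
have hn1 : (n.+1%:R : K) != 0 by rewrite pnatr_eq0.
have hn1' : (1 + n%:R : K) != 0 by rewrite addrC natr1 pnatr_eq0.
case: j hjn => [|i] hjn.
  rewrite /Tt /Wf /bb /= !Ak0 !subn0 !mulr1 ?subr0 ?add0r ?addr0.
  have r := mul_bin_left k n.
  have rK : (n.+1%:R * 'C(k, n.+1)%:R : K) = (k - n)%:R * 'C(k, n)%:R.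
    by rewrite -!natrM r.
  have -> : ('C(k, n.+1)%:R : K) = (k - n)%:R * 'C(k, n)%:R / n.+1%:R.
    by rewrite -rK mulrC mulKf.
  rewrite hkn. field. exact: hn1'.
set j := i.+1.
have hin : (i < n)%N by [].
have r1 := mul_bin_left (k - j) (n - j).
have r2 := mul_bin_diag (k - i) (n - j).
have e1 : (n - j).+1 = (n.+1 - j)%N by rewrite subSn.
have e2 : (k - j - (n - j) = k - n)%N by lia.
have e3 : (k - i).-1 = (k - j)%N by lia.
have e4 : (n - j).+1 = (n - i)%N by lia.
rewrite e1 e2 in r1. rewrite e3 e4 in r2.
have hni : ((n - i)%:R : K) != 0 by rewrite pnatr_eq0; lia.
have h5 : (i < n.+1)%N by lia.
rewrite /Tt /Wf /bb /j h5 hin (ltnW hin) -/j.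
have -> : ('C(k - j, n.+1 - j)%:R : K) = (k - n)%:R * 'C(k - j, n - j)%:R / (n - i)%:R.
  have : ((n - i)%:R * 'C(k - j, n.+1 - j)%:R : K) = (k - n)%:R * 'C(k - j, n - j)%:R.
    have e5 : (n.+1 - j = n - i)%N by lia.
    by rewrite -!natrM -e5 r1.
  by move=> <-; rewrite mulrC mulKf.
have -> : ('C(k - i, n - i)%:R : K) = (k - i)%:R * 'C(k - j, n - j)%:R / (n - i)%:R.
  have : ((n - i)%:R * 'C(k - i, n - i)%:R : K) = (k - i)%:R * 'C(k - j, n - j)%:R.
    by rewrite -!natrM -r2 mulnC.
  by move=> <-; rewrite mulrC mulKf.
rewrite Ak_rec.
have h2 : a + 1 + i%:R != 0 by rewrite addr_eq0 ha.
have h3 : (i.+1%:R : K) != 0 by rewrite pnatr_eq0.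
rewrite hkn (natrB _ (ltnW hin)) (natrB _ (_ : i <= k)%N); last by lia.
rewrite (natrB _ (ltnW hin)) in hni.
have h3' : (1 + i%:R : K) != 0 by rewrite addrC natr1 pnatr_eq0.
rewrite /j.
field.
by rewrite hni h3' h2.
Qed.


Lemma LW n k : (n < k)%N ->
  n.+1%:R * (n.+1%:R + a) * CG a b n.+1 k k
  + (k - n)%:R * ((k - n)%:R + b) * CG a b n k k = 0.
Proof.
move=> hnk; rewrite !link // /Rs.
rewrite (@sum_trunc (Tt k k n.+1) n.+2 k.+1); first last.
- by move=> j hj; rewrite /Tt /bb; case: ifP => h; [lia| rewrite mul0r].
- lia.
rewrite (@sum_trunc (Tt k k n) n.+2 k.+1); first last.
- by move=> j hj; rewrite /Tt /bb; case: ifP => h; [lia| rewrite mul0r].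
- lia.
rewrite !mulr_sumr -big_split /= big_ord_recr /=.
rewrite (eq_bigr (fun j : 'I_n.+1 => (k - n)%:R * (Wf k n j.+1 - Wf k n j))); last first.
  by move=> j _; rewrite LW_term // -ltnS.
rewrite -mulr_sumr -(big_mkord xpredT (fun j => Wf k n j.+1 - Wf k n j)).
rewrite telescope_sumr // /Wf /Tt /bb leqnn ltnn subnn bin0 subr0 mul0r mulr0 addr0 mulr1.
rewrite Ak_rec.
have h2 : a + 1 + n%:R != 0 by rewrite addr_eq0 ha.
have h3' : (1 + n%:R : K) != 0 by rewrite addrC natr1 pnatr_eq0.
rewrite (natrB _ (ltnW hnk)).
rewrite ltnSn subnn bin0 mul1r.
field.
by rewrite h3' h2.
Qed.


Hypothesis hab : forall j : nat, a + b + 2 != - j%:R.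

Lemma Akk_neq0 k : Ak k k != 0.
Proof.
rewrite /Ak; apply: mulf_neq0; [apply: mulf_neq0|]; last first.
- rewrite invr_neq0 // mulf_neq0 ?pa_neq0 //.
  by rewrite pnatr_eq0 -lt0n fact_gt0.
- apply: poch_neq0 => i hi.
  have -> : k%:R + a + b + 1 + i%:R = a + b + 2 + (k + i - 1)%:R :> K.
    rewrite natrB; last by lia.
    rewrite natrD; ring.
  by rewrite addr_eq0 hab.
- apply: poch_neq0 => i hi.
  have -> : - k%:R + i%:R = - (k - i)%:R :> K.
    rewrite natrB; last by lia.
    ring.
  by rewrite oppr_eq0 pnatr_eq0; lia.
Qed.


Lemma CG_unitmx N : (\matrix_(k < N.+1, n < N.+1) CG a b n k N) \in unitmx.
Proof.
pose Am := \matrix_(k < N.+1, j < N.+1) Ak k j.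
pose Bm := \matrix_(j < N.+1, n < N.+1) ((bb N n j)%:R : K).
have -> : \matrix_(k < N.+1, n < N.+1) CG a b n k N = Am *m Bm.
  apply/matrixP => k n; rewrite !mxE link; last by have := ltn_ord k; lia.
  under eq_bigr do rewrite !mxE.
  rewrite /Rs (@sum_trunc (fun j => Ak k j * (bb N n j)%:R) k.+1 N.+1); first last.
  - by move=> j hj; rewrite Ak_big ?mul0r.
  - exact: ltn_ord.
  by apply: eq_bigr => j _; rewrite /Tt mulrC.
rewrite unitmxE det_mulmx unitrM -[\det Bm]det_tr.
rewrite (det_trig (_ : is_trig_mx Am)); last first.
  by apply/is_trig_mxP => i j hij; rewrite mxE Ak_big.
rewrite (det_trig (_ : is_trig_mx Bm^T)); last first.
  apply/is_trig_mxP => i j hij; rewrite !mxE /bb.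
  by rewrite leqNgt hij.
rewrite !unitfE; apply/andP; split; apply/prodf_neq0 => i _; rewrite !mxE.
  exact: Akk_neq0.
by rewrite /bb leqnn subnn bin0 oner_eq0.
Qed.

End Gen.

Section Ops.
Variable K : numFieldType.
Variables a b l1 l2 : K.
Hypothesis hl1 : forall j : nat, l1 != - j%:R.
Hypothesis hl2 : forall j : nat, l2 != - j%:R.
Hypothesis hconstr : a + b + 2 = l1 + l2.

Lemma two_neq0 : (2 : K) != 0.
Proof. by rewrite pnatr_eq0. Qed.

Lemma DF_eq (w : tvec K) n m : DF l1 l2 a b w n m =
  - (n.+1%:R * (n%:R + a + 1)) * w n.+1 m - m.+1%:R * (m%:R + b + 1) * w n m.+1.
Proof.
have h1 : l1 + n%:R != 0 by rewrite addr_eq0 hl1.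
have h2 : l2 + m%:R != 0 by rewrite addr_eq0 hl2.
have h1' : l1 + 2 * n%:R + l1 = 2 * (l1 + n%:R) by ring.
have h2' : l2 + 2 * m%:R + l2 = 2 * (l2 + m%:R) by ring.
rewrite /DF /tens1 /tens2 /fH /opF /Defs.ratio h1' h2'.
field.
by rewrite h1 h2.
Qed.

Lemma DH_eq (w : tvec K) n m : DH l1 l2 w n m = (l1 + l2 + 2 * (n + m)%N%:R) * w n m.
Proof. rewrite /DH /tens1 /tens2 /opH natrD; ring. Qed.

Lemma DE_eq (w : tvec K) n m : DE w n m =
  (if n is n'.+1 then w n' m else 0) + (if m is m'.+1 then w n m' else 0).
Proof. by []. Qed.

Lemma rel_HE (w : tvec K) n m : tcomm (DH l1 l2) (@DE _) w n m = 2 * DE w n m.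
Proof.
rewrite /tcomm DH_eq !DE_eq.
case: n => [|n]; case: m => [|m]; rewrite ?DH_eq; try ring.
all: rewrite ?addnS ?addSn; ring.
Qed.

Lemma rel_HF (w : tvec K) n m :
  tcomm (DH l1 l2) (DF l1 l2 a b) w n m = - 2 * DF l1 l2 a b w n m.
Proof.
rewrite /tcomm DH_eq !DF_eq !DH_eq ?addnS ?addSn; ring.
Qed.

Lemma rel_EF (w : tvec K) n m :
  tcomm (@DE _) (DF l1 l2 a b) w n m = DH l1 l2 w n m.
Proof.
rewrite /tcomm DE_eq DH_eq -hconstr.
case: n => [|n]; case: m => [|m]; rewrite !DF_eq !DE_eq ?addnS ?addSn; ring.
Qed.

Hypothesis ha : forall j : nat, a + 1 != - j%:R.

Lemma cg_H k j n m : DH l1 l2 (cgvec a b k j) n m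
   = (l1 + l2 + 2 * k%:R + 2 * j%:R) * cgvec a b k j n m.
Proof.
rewrite DH_eq /cgvec; case: eqP => h; last by rewrite !mulr0.
have h' : (n + m)%N = (k + j)%N := h.
rewrite h' natrD; ring.
Qed.

Lemma cgvecE k j n m : cgvec a b k j n m =
  if (n + m == k + j)%N then CG a b n k (k + j) else 0.
Proof. by []. Qed.

Lemma cg_E k j n m : DE (cgvec a b k j) n m = cgvec a b k j.+1 n m.
Proof.
have hE := @CG_E K a b ha n k (k + j) (leq_addr _ _).
rewrite DE_eq.
case: n hE => [|n] hE; case: m => [|m];
  rewrite !cgvecE ?add0n ?addn0 ?addnS ?addSn ?eqSS ?add0r ?addr0.
- done.
- rewrite -hE add0r.
  by case: eqP.
- case: eqP => h //.
  rewrite -hE h [CG _ _ _.+1 _ _]/CG bin_small ?mul0r ?addr0 //.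
- rewrite -hE.
  by case: eqP => _; rewrite ?addr0.
Qed.

Lemma cg_F0 k n m : DF l1 l2 a b (cgvec a b k 0) n m = 0.
Proof.
rewrite DF_eq !cgvecE !addn0 addSn addnS.
case: eqP => h; last by rewrite !mulr0 subrr.
have hnk : (n < k)%N by lia.
have e : (k - n = m.+1)%N by lia.
have L := @LW K a b ha n k hnk.
rewrite e in L.
rewrite -[RHS]oppr0 -L; ring.
Qed.

Lemma DF_ext (w w' : tvec K) n m : (forall n m, w n m = w' n m) ->
  DF l1 l2 a b w n m = DF l1 l2 a b w' n m.
Proof. by move=> h; rewrite !DF_eq !h. Qed.

Lemma DE_ext (w w' : tvec K) n m : (forall n m, w n m = w' n m) ->
  DE w n m = DE w' n m.
Proof. by move=> h; rewrite !DE_eq; case: n => [|n]; case: m => [|m]; rewrite ?h. Qed.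

Lemma DE_scale c (w : tvec K) n m : DE (fun n m => c * w n m) n m = c * DE w n m.
Proof.
rewrite !DE_eq; case: n => [|n]; case: m => [|m] /=; ring.
Qed.

Lemma cg_Fgen k j n m : DF l1 l2 a b (cgvec a b k j) n m =
  - (j%:R * (j%:R - 1 + (l1 + l2 + 2 * k%:R))) * cgvec a b k j.-1 n m.
Proof.
elim: j n m => [|j IH] n m.
  by rewrite cg_F0 mul0r oppr0 mul0r.
rewrite (@DF_ext _ (DE (cgvec a b k j))); last by move=> n' m'; rewrite cg_E.
have R := rel_EF (cgvec a b k j) n m.
rewrite /tcomm in R.
have -> : DF l1 l2 a b (DE (cgvec a b k j)) n m
    = DE (DF l1 l2 a b (cgvec a b k j)) n m - DH l1 l2 (cgvec a b k j) n m.
  by rewrite -R; ring.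
rewrite (@DE_ext _ (fun n m => - (j%:R * (j%:R - 1 + (l1 + l2 + 2 * k%:R)))
     * cgvec a b k j.-1 n m)); last by move=> n' m'; rewrite IH.
rewrite DE_scale cg_H /=.
clear R; case: j IH => [|j] IH.
  rewrite mul0r oppr0 mul0r; ring.
rewrite cg_E /=.
ring.
Qed.

End Ops.

Local Open Scope complex_scope.

Theorem mainTheorem6 (R : realType) (alpha beta l1 l2 : R[i])
  (hl1 : forall j : nat, l1 != - j%:R)
  (hl2 : forall j : nat, l2 != - j%:R)
  (hl12 : forall j : nat, l1 + l2 != - j%:R)
  (hconstr : alpha + beta + 2 = l1 + l2) :
  (* Delta is an algebra homomorphism U(sl2) -> End(V_l1 (x) V_l2):
     the images of H, E, F satisfy the defining relations of sl2 *)
  [/\ (forall w : tvec R[i], fin_supp w -> forall n m,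
         tcomm (DH l1 l2) (@DE _) w n m = 2 * DE w n m),
      (forall w : tvec R[i], fin_supp w -> forall n m,
         tcomm (DH l1 l2) (DF l1 l2 alpha beta) w n m
           = - 2 * DF l1 l2 alpha beta w n m),
      (forall w : tvec R[i], fin_supp w -> forall n m,
         tcomm (@DE _) (DF l1 l2 alpha beta) w n m = DH l1 l2 w n m),
      (* decomposition V_l1 (x) V_l2 ~ (+)_k V_{l1+l2+2k} with the given
         Clebsch--Gordan coefficients *)
      ((forall j : nat, alpha + 1 != - j%:R) ->
       [/\ (forall k j n m, DH l1 l2 (cgvec alpha beta k j) n m
              = (l1 + l2 + 2 * k%:R + 2 * j%:R) * cgvec alpha beta k j n m),
           (forall k j n m, DE (cgvec alpha beta k j) n m
              = cgvec alpha beta k j.+1 n m),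
           (forall k n m, DF l1 l2 alpha beta (cgvec alpha beta k 0) n m = 0),
           (forall k j n m, DF l1 l2 alpha beta (cgvec alpha beta k j.+1) n m
              = - (j.+1%:R * (j%:R + (l1 + l2 + 2 * k%:R)))
                  * cgvec alpha beta k j n m)
         & (forall N : nat,
              (\matrix_(k < N.+1, n < N.+1) CG alpha beta n k N)
                \in unitmx)])
    & (alpha + 1 = l1 -> beta + 1 = l2 ->
       forall (w : tvec R[i]) n m, DF l1 l2 alpha beta w n m
         = tens1 (opF l1) w n m + tens2 (opF l2) w n m)].
Proof.
have hab : forall j : nat, alpha + beta + 2 != - j%:R by move=> j; rewrite hconstr hl12.
split.
- by move=> w _ n m; apply: rel_HE.
- by move=> w _ n m; apply: (@rel_HF _ _ _ _ _ hl1 hl2).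
- by move=> w _ n m; apply: (@rel_EF _ _ _ _ _ hl1 hl2 hconstr).
- move=> ha; split.
  + by move=> k j n m; apply: cg_H.
  + by move=> k j n m; apply: cg_E.
  + by move=> k n m; apply: (@cg_F0 _ _ _ _ _ hl1 hl2 ha).
  + move=> k j n m; rewrite (@cg_Fgen _ _ _ _ _ hl1 hl2 hconstr ha) /=; ring.
  + by move=> N; apply: CG_unitmx.
- move=> e1 e2 w n m.
  rewrite (@DF_eq _ _ _ _ _ hl1 hl2) /tens1 /tens2 /opF -e1 -e2; ring.
Qed.
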